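(* Let $M$ be an OHFM in $\mathcal{C}$ and let $V=\mathbb{R}\otimes_\mathbb{Z}\mathrm{gp}(M)$. Let $\mathcal{N}$ be the set of faces $F$ of $\mathsf{cone}_V(M)$ such that the face submonoid $M\cap F$ is not a UFM. Then either $\mathcal{N}=\emptyset$, or there is a face $F_0$ of $\mathsf{cone}_V(M)$ such that $\mathcal{N}=\{F : F \text{ a face of } \mathsf{cone}_V(M),\ F_0\subseteq F\}$, i.e., $\mathcal{N}$ is the interval $[F_0,\mathsf{cone}_V(M)]$ of the face lattice.
   Context: Convention: all monoids are commutative, cancellative, and reduced, written additively; atoms $\mathcal{A}(M)=M^\bullet\setminus(M^\bullet+M^\bullet)$ with $M^\bullet=M\setminus\{0\}$. $\mathcal{C}$ is the class of monoids isomorphic to a submonoid of a free commutative monoid of finite rank (equivalently, of $(\mathbb{N}^d,+)$). $M$ is regarded as a submonoid of $V$; $\mathsf{cone}_V(M)$ is the set of finite nonnegative linear combinations of elements of $M$. A face of a cone $C$ is a cone $F\subseteq C$ such that whenever $x,y\in C$ and $F$ meets the open segment between $x$ and $y$, then $x,y\in F$; the face lattice is the set of faces ordered by inclusion; a face submonoid is $M\cap F$ for a face $F$. A factorization of $x$ is a multiset of atoms summing to $x$, its length the number of atoms with multiplicity. UFM: every element has exactly one factorization. OHFM: every element has a factorization and for each nonzero $x$, two factorizations of $x$ of equal length coincide. *)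

(* Defs.v *)
From Stdlib Require Import Reals List Permutation.
Open Scope R_scope.

(* Elements of N^d are represented as nat -> nat functions vanishing at
   coordinates >= d; real vectors as nat -> R. *)
Definition nvec := nat -> nat.
Definition rvec := nat -> R.

Definition nzero : nvec := fun _ => 0%nat.
Definition nadd (x y : nvec) : nvec := fun i => (x i + y i)%nat.
Definition nsum (l : list nvec) : nvec := fold_right nadd nzero l.

Definition submonoid_Nd (d : nat) (M : nvec -> Prop) : Prop :=
  (forall x, M x -> forall i, (d <= i)%nat -> x i = 0%nat) /\
  M nzero /\
  (forall x y, M x -> M y -> M (nadd x y)).

Definition is_atom (M : nvec -> Prop) (a : nvec) : Prop :=
  M a /\ a <> nzero /\
  ~ (exists y z, M y /\ M z /\ y <> nzero /\ z <> nzero /\ a = nadd y z).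

(* a factorization of x: a multiset (list up to permutation) of atoms summing to x *)
Definition is_factorization (M : nvec -> Prop) (x : nvec) (l : list nvec) : Prop :=
  Forall (is_atom M) l /\ nsum l = x.

Definition UFM (M : nvec -> Prop) : Prop :=
  forall x, M x ->
    (exists l, is_factorization M x l) /\
    (forall l1 l2, is_factorization M x l1 -> is_factorization M x l2 ->
       Permutation l1 l2).

Definition OHFM (M : nvec -> Prop) : Prop :=
  (forall x, M x -> exists l, is_factorization M x l) /\
  (forall x, M x -> x <> nzero ->
     forall l1 l2, is_factorization M x l1 -> is_factorization M x l2 ->
       length l1 = length l2 -> Permutation l1 l2).

Definition rzero : rvec := fun _ => 0.
Definition radd (u v : rvec) : rvec := fun i => u i + v i.
Definition rscale (c : R) (u : rvec) : rvec := fun i => c * u i.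
Definition embed (x : nvec) : rvec := fun i => INR (x i).

Definition cone_of (M : nvec -> Prop) (v : rvec) : Prop :=
  exists l : list (R * nvec),
    Forall (fun p => 0 <= fst p /\ M (snd p)) l /\
    v = fold_right (fun p acc => radd (rscale (fst p) (embed (snd p))) acc) rzero l.

Definition is_cone (F : rvec -> Prop) : Prop :=
  F rzero /\ (forall u v, F u -> F v -> F (radd u v)) /\
  (forall c u, 0 <= c -> F u -> F (rscale c u)).

Definition is_face (C F : rvec -> Prop) : Prop :=
  is_cone F /\ (forall v, F v -> C v) /\
  (forall x y, C x -> C y ->
     (exists t, 0 < t < 1 /\ F (radd (rscale (1 - t) x) (rscale t y))) ->
     F x /\ F y).

Definition face_submonoid (M : nvec -> Prop) (F : rvec -> Prop) : nvec -> Prop :=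
  fun x => M x /\ F (embed x).

(* Main.v *)
Require Import Defs.
From Stdlib Require Import Reals List Permutation.
From Stdlib Require Import Lra Lia FunctionalExtensionality Classical ClassicalEpsilon.
Open Scope R_scope.

Lemma nadd_comm x y : nadd x y = nadd y x.
Proof. extensionality i; unfold nadd; lia. Qed.
Lemma nadd_assoc x y z : nadd x (nadd y z) = nadd (nadd x y) z.
Proof. extensionality i; unfold nadd; lia. Qed.
Lemma nadd_0l x : nadd nzero x = x.
Proof. extensionality i; unfold nadd, nzero; lia. Qed.
Lemma nadd_cancel a x y : nadd a x = nadd a y -> x = y.
Proof. intro H; extensionality i. assert (H1 := f_equal (fun f => f i) H); simpl in H1; unfold nadd in H1; lia. Qed.

Lemma nsum_app l1 l2 : nsum (l1 ++ l2) = nadd (nsum l1) (nsum l2).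
Proof. induction l1; simpl. now rewrite nadd_0l. unfold nsum in *; simpl. rewrite IHl1. apply nadd_assoc. Qed.

Lemma nsum_perm l1 l2 : Permutation l1 l2 -> nsum l1 = nsum l2.
Proof.
  induction 1; unfold nsum in *; simpl; try congruence.
  rewrite !nadd_assoc, (nadd_comm y x); reflexivity.
Qed.

Fixpoint rep (k : nat) (l : list nvec) : list nvec :=
  match k with O => nil | S k => l ++ rep k l end.

Lemma nsum_rep_eq k l l' : nsum l = nsum l' -> nsum (rep k l) = nsum (rep k l').
Proof. intro H; induction k; simpl; auto. rewrite !nsum_app, H, IHk; auto. Qed.

Lemma rep_length k l : length (rep k l) = (k * length l)%nat.
Proof. induction k; simpl; auto. rewrite length_app, IHk; lia. Qed.

Lemma Forall_rep {P : nvec -> Prop} k l : Forall P l -> Forall P (rep k l).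
Proof. intro H; induction k; simpl; auto. apply Forall_app; auto. Qed.

Definition eqd : forall x y : nvec, {x = y} + {x <> y} :=
  fun x y => excluded_middle_informative (x = y).

Lemma count_rep k l a : count_occ eqd (rep k l) a = (k * count_occ eqd l a)%nat.
Proof. induction k; simpl; auto. rewrite count_occ_app, IHk; lia. Qed.

Lemma embed_nadd x y : embed (nadd x y) = radd (embed x) (embed y).
Proof. extensionality i; unfold embed, radd, nadd; apply plus_INR. Qed.
Lemma embed_nzero : embed nzero = rzero.
Proof. extensionality i; reflexivity. Qed.

Section S.
Variable (d : nat) (M : nvec -> Prop) (Hsub : submonoid_Nd d M).

Lemma M_nsum l : Forall (is_atom M) l -> M (nsum l).
Proof.
  destruct Hsub as [_ [H0 Hadd]]. induction 1; simpl; auto.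
  apply Hadd; auto. apply H.
Qed.

Definition cf (l : list (R * nvec)) : rvec :=
  fold_right (fun p acc => radd (rscale (fst p) (embed (snd p))) acc) rzero l.

Lemma cf_app l1 l2 : cf (l1 ++ l2) = radd (cf l1) (cf l2).
Proof.
  induction l1; simpl. extensionality i; unfold radd, rzero; ring.
  rewrite IHl1. extensionality i; unfold radd; ring.
Qed.

Lemma cf_scale c l : cf (map (fun p => (c * fst p, snd p)) l) = rscale c (cf l).
Proof.
  induction l; simpl. extensionality i; unfold rscale, rzero; ring.
  rewrite IHl. extensionality i; unfold radd, rscale; ring.
Qed.

Lemma cone_add u v : cone_of M u -> cone_of M v -> cone_of M (radd u v).
Proof.
  intros [l1 [F1 E1]] [l2 [F2 E2]]. exists (l1 ++ l2). split.
  apply Forall_app; auto. subst; symmetry; apply cf_app.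
Qed.

Lemma cone_scale c u : 0 <= c -> cone_of M u -> cone_of M (rscale c u).
Proof.
  intros Hc [l [F1 E1]]. exists (map (fun p => (c * fst p, snd p)) l). split.
  - rewrite Forall_map. eapply Forall_impl; [|exact F1]. intros [r x] [H1 H2]; simpl in *.
    split; auto. apply Rmult_le_pos; auto.
  - subst; symmetry; apply cf_scale.
Qed.

Lemma cone_embed x : M x -> cone_of M (embed x).
Proof.
  intro H. exists ((1, x) :: nil). split. constructor; simpl; auto; split; auto; lra.
  simpl. extensionality i; unfold radd, rscale, rzero; ring.
Qed.

Lemma cone_zero : cone_of M rzero.
Proof. exists nil; split; auto. Qed.

Lemma face_split G u v : is_face (cone_of M) G -> cone_of M u -> cone_of M v ->
  G (radd u v) -> G u /\ G v.
Proof.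
  intros [[G0 [Gadd Gsc]] [Gsub Gext]] Hu Hv Huv.
  destruct (Gext (rscale 2 u) (rscale 2 v)) as [H1 H2].
  - apply cone_scale; auto; lra.
  - apply cone_scale; auto; lra.
  - exists (1/2); split; [lra|].
    replace (radd (rscale (1 - 1 / 2) (rscale 2 u)) (rscale (1 / 2) (rscale 2 v))) with (radd u v); auto.
    extensionality i; unfold radd, rscale; field.
  - apply (Gsc (1/2)) in H1; [|lra]. apply (Gsc (1/2)) in H2; [|lra].
    replace (rscale (1/2) (rscale 2 u)) with u in H1 by (extensionality i; unfold rscale; field).
    replace (rscale (1/2) (rscale 2 v)) with v in H2 by (extensionality i; unfold rscale; field).
    auto.
Qed.

Lemma face_nsum G l : is_face (cone_of M) G -> Forall M l -> G (embed (nsum l)) ->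
  Forall (fun a => G (embed a)) l.
Proof.
  intros HG. induction 1; intros H1; constructor.
  - simpl in H1. rewrite embed_nadd in H1. apply face_split in H1; auto.
    + tauto.
    + apply cone_embed; auto.
    + apply cone_embed. clear -Hsub H0.
      induction H0; simpl. apply Hsub. apply Hsub; auto.
  - apply IHForall. simpl in H1. rewrite embed_nadd in H1. apply face_split in H1; auto.
    + tauto.
    + apply cone_embed; auto.
    + apply cone_embed. clear -Hsub H0.
      induction H0; simpl. apply Hsub. apply Hsub; auto.
Qed.


Lemma Mnsum' l : Forall M l -> M (nsum l).
Proof. induction 1; simpl. apply Hsub. apply Hsub; auto. Qed.

Lemma atom_of_face G a : is_face (cone_of M) G -> is_atom (face_submonoid M G) a -> is_atom M a.
Proof.
  intros HG [[Ma Ga] [Hnz Hno]]. split; auto. split; auto.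
  intros [y [z [My [Mz [Hy [Hz E]]]]]]. apply Hno.
  assert (G (embed y) /\ G (embed z)) as [Gy Gz].
  { apply face_split; try apply cone_embed; auto. rewrite <- embed_nadd, <- E; auto. }
  exists y, z; repeat split; auto.
Qed.

Lemma atom_to_face G a : is_atom M a -> G (embed a) -> is_atom (face_submonoid M G) a.
Proof.
  intros [Ma [Hnz Hno]] Ga. split. split; auto. split; auto.
  intros [y [z [[My _] [[Mz _] [Hy [Hz E]]]]]]. apply Hno. exists y, z; auto.
Qed.

Lemma nsum_nonzero l : Forall (is_atom M) l -> l <> nil -> nsum l <> nzero.
Proof.
  intros HF Hl E. destruct l as [|a l]; [congruence|]. inversion HF; subst.
  destruct H1 as [_ [Hnz _]]. apply Hnz. extensionality i.
  assert (H := f_equal (fun f => f i) E). simpl in H. unfold nadd, nzero in *. lia.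
Qed.

Lemma fact_zero l : Forall (is_atom M) l -> nsum l = nzero -> l = nil.
Proof. intros HF E. destruct l; auto. exfalso; eapply nsum_nonzero; eauto; congruence. Qed.

Lemma nonUFM_pair G : OHFM M -> is_face (cone_of M) G -> ~ UFM (face_submonoid M G) ->
  exists z z', Forall (is_atom M) z /\ Forall (is_atom M) z' /\ nsum z = nsum z' /\
    ~ Permutation z z' /\ Forall (fun a => G (embed a)) (z ++ z').
Proof.
  intros HO HG HU. apply not_all_ex_not in HU as [x Hx].
  apply imply_to_and in Hx as [[Mx Gx] Hx].
  apply not_and_or in Hx as [Hx|Hx].
  - exfalso. apply Hx. destruct (proj1 HO x Mx) as [l [HF E]].
    assert (Forall (fun a => G (embed a)) l).
    { apply face_nsum; auto. eapply Forall_impl; [|exact HF]; intros a Ha; apply Ha. congruence. }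
    exists l. split; auto. rewrite Forall_forall in *. intros a Ha. apply atom_to_face; auto.
  - apply not_all_ex_not in Hx as [l1 Hx]. apply not_all_ex_not in Hx as [l2 Hx].
    apply imply_to_and in Hx as [[F1 E1] Hx]. apply imply_to_and in Hx as [[F2 E2] Hx].
    exists l1, l2. rewrite Forall_forall in F1, F2.
    split; [rewrite Forall_forall; intros; eapply atom_of_face; eauto|].
    split; [rewrite Forall_forall; intros; eapply atom_of_face; eauto|].
    split; [congruence|]. split; auto.
    rewrite Forall_forall; intros a Ha. apply in_app_or in Ha as [Ha|Ha].
    apply F1 in Ha; apply Ha. apply F2 in Ha; apply Ha.
Qed.

Lemma disjoint_pair : forall n z z', (length z + length z' <= n)%nat ->
  Forall (is_atom M) z -> Forall (is_atom M) z' -> nsum z = nsum z' -> ~ Permutation z z' ->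
  exists w w', Forall (is_atom M) w /\ Forall (is_atom M) w' /\ nsum w = nsum w' /\
    ~ Permutation w w' /\ (forall a, In a w -> ~ In a w') /\ incl w z /\ incl w' z'.
Proof.
  induction n; intros z z' Hn F1 F2 E NP.
  - destruct z, z'; simpl in Hn; try lia. exfalso; apply NP; constructor.
  - destruct (classic (exists a, In a z /\ In a z')) as [[a [Ha Ha']]|Hno].
    + apply in_split in Ha as [r1 [r2 ->]]. apply in_split in Ha' as [s1 [s2 ->]].
      assert (P1 := Permutation_middle r1 r2 a). assert (P2 := Permutation_middle s1 s2 a).
      destruct (IHn (r1 ++ r2) (s1 ++ s2)) as [w [w' [H1 [H2 [H3 [H4 [H5 [H6 H7]]]]]]]].
      * rewrite !length_app in *; simpl in Hn; lia.
      * apply Permutation_sym in P1. eapply Permutation_Forall in F1; [|exact P1]. inversion F1; auto.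
      * apply Permutation_sym in P2. eapply Permutation_Forall in F2; [|exact P2]. inversion F2; auto.
      * apply nsum_perm in P1, P2. apply (nadd_cancel a). unfold nsum in *; simpl in *. congruence.
      * intro P. apply NP. eapply Permutation_trans; [apply Permutation_sym, P1|].
        eapply Permutation_trans; [|exact P2]. constructor; auto.
      * exists w, w'. repeat split; auto.
        intros x Hx; apply H6 in Hx; apply in_app_or in Hx; apply in_or_app; simpl; tauto.
        intros x Hx; apply H7 in Hx; apply in_app_or in Hx; apply in_or_app; simpl; tauto.
    + exists z, z'. repeat split; auto. intros a Ha Ha'; apply Hno; eauto.
      apply incl_refl. apply incl_refl.
Qed.

Lemma key (HO : OHFM M) z1 z1' z2 z2' :
  Forall (is_atom M) z1 -> Forall (is_atom M) z1' -> nsum z1 = nsum z1' ->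
  (length z1 < length z1')%nat -> (forall a, In a z1 -> ~ In a z1') ->
  Forall (is_atom M) z2 -> Forall (is_atom M) z2' -> nsum z2 = nsum z2' ->
  (length z2 < length z2')%nat ->
  forall a, In a (z1 ++ z1') -> In a (z2 ++ z2').
Proof.
  intros F1 F1' E1 L1 D F2 F2' E2 L2 a Ha.
  set (k1 := (length z1' - length z1)%nat). set (k2 := (length z2' - length z2)%nat).
  set (L := rep k2 z1' ++ rep k1 z2). set (L' := rep k2 z1 ++ rep k1 z2').
  assert (FL : Forall (is_atom M) L) by (apply Forall_app; split; apply Forall_rep; auto).
  assert (FL' : Forall (is_atom M) L') by (apply Forall_app; split; apply Forall_rep; auto).
  assert (EL : nsum L' = nsum L).
  { unfold L, L'. rewrite !nsum_app. f_equal; apply nsum_rep_eq; auto. }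
  assert (P : Permutation L L').
  { apply (proj2 HO (nsum L)).
    - apply M_nsum; auto.
    - apply nsum_nonzero; auto. unfold L. destruct k2 eqn:Ek; [unfold k2 in Ek; lia|].
      simpl. destruct z1'; simpl in *; [lia|congruence].
    - split; auto.
    - split; auto.
    - unfold L, L'. rewrite !length_app, !rep_length. unfold k1, k2. nia. }
  rewrite (Permutation_count_occ eqd) in P. specialize (P a).
  unfold L, L' in P. rewrite !count_occ_app, !count_rep in P.
  assert (k1 > 0)%nat by (unfold k1; lia). assert (k2 > 0)%nat by (unfold k2; lia).
  apply in_or_app.
  apply in_app_or in Ha as [Ha|Ha].
  - assert (~ In a z1') as Hn by auto. rewrite (count_occ_not_In eqd) in Hn.
    rewrite (count_occ_In eqd) in Ha.
    left. apply (count_occ_In eqd). nia.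
  - destruct (classic (In a z1)) as [Hi|Hi]. exfalso; eapply D; eauto.
    rewrite (count_occ_not_In eqd) in Hi. rewrite (count_occ_In eqd) in Ha.
    right. apply (count_occ_In eqd). nia.
Qed.

End S.

Lemma cone_nsum (F : rvec -> Prop) l : is_cone F -> Forall (fun a => F (embed a)) l -> F (embed (nsum l)).
Proof.
  intros [F0 [Fa _]]. induction 1; simpl. rewrite embed_nzero; auto.
  rewrite embed_nadd; auto.
Qed.

Lemma order_pair d M (Hsub : submonoid_Nd d M) (HO : OHFM M) z z' :
  Forall (is_atom M) z -> Forall (is_atom M) z' -> nsum z = nsum z' -> ~ Permutation z z' ->
  (length z < length z')%nat \/ (length z' < length z)%nat.
Proof.
  intros F1 F2 E NP.
  destruct (PeanoNat.Nat.lt_trichotomy (length z) (length z')) as [H|[H|H]]; auto.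
  exfalso. destruct (classic (nsum z = nzero)) as [Z|Z].
  - apply (fact_zero M) in F1 as ->; auto. rewrite E in Z.
    apply (fact_zero M) in F2 as ->; auto.
  - apply NP. apply (proj2 HO (nsum z)); auto.
    + apply (M_nsum d M Hsub); auto.
    + split; auto.
    + split; auto.
Qed.

Theorem mainTheorem12 (d : nat) (M : nvec -> Prop) :
  submonoid_Nd d M -> OHFM M ->
  (forall F, is_face (cone_of M) F -> UFM (face_submonoid M F)) \/
  (exists F0, is_face (cone_of M) F0 /\
     forall F, is_face (cone_of M) F ->
       (~ UFM (face_submonoid M F) <-> (forall v, F0 v -> F v))).
Proof.
  intros Hsub HO.
  destruct (classic (forall F, is_face (cone_of M) F -> UFM (face_submonoid M F))) as [H|H];
    [left; auto|right].
  apply not_all_ex_not in H as [F1 H]; apply imply_to_and in H as [HF1 HU1].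
  destruct (nonUFM_pair d M Hsub F1 HO HF1 HU1) as [z [z' [Fz [Fz' [Ez [NPz _]]]]]].
  destruct (disjoint_pair M (length z + length z') z z' (le_n _) Fz Fz' Ez NPz)
    as [w [w' [Fw [Fw' [Ew [NPw [Dw _]]]]]]].
  assert (exists u u', Forall (is_atom M) u /\ Forall (is_atom M) u' /\ nsum u = nsum u' /\
    ~ Permutation u u' /\ (forall a, In a u -> ~ In a u') /\ (length u < length u')%nat)
    as [u [u' [Fu [Fu' [Eu [NPu [Du Lu]]]]]]].
  { destruct (order_pair d M Hsub HO w w' Fw Fw' Ew NPw) as [L|L].
    - exists w, w'; repeat split; auto.
    - exists w', w; repeat split; auto.
      intro P; apply NPw; apply Permutation_sym; auto.
      intros a H1 H2; eapply Dw; eauto. }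
  set (F0 := fun v => cone_of M v /\ forall G, is_face (cone_of M) G ->
                ~ UFM (face_submonoid M G) -> G v).
  assert (HA : forall a, In a (u ++ u') -> F0 (embed a)).
  { intros a Ha. split.
    - apply (cone_embed M). apply in_app_or in Ha as [Ha|Ha].
      rewrite Forall_forall in Fu; apply Fu; auto.
      rewrite Forall_forall in Fu'; apply Fu'; auto.
    - intros G HG HU.
      destruct (nonUFM_pair d M Hsub G HO HG HU) as [y [y' [Fy [Fy' [Ey [NPy Gy]]]]]].
      rewrite Forall_forall in Gy. apply Gy.
      destruct (order_pair d M Hsub HO y y' Fy Fy' Ey NPy) as [L|L].
      + eapply (key d M Hsub HO u u' y y'); eauto.
      + assert (In a (y' ++ y)) by (eapply (key d M Hsub HO u u' y' y); eauto).
        apply in_app_or in H as [H|H]; apply in_or_app; tauto. }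
  exists F0. split.
  - split; [split; [|split]|split].
    + split; [exact (cone_zero M)|]. intros G HG _; destruct HG as [[G0 _] _]; exact G0.
    + intros x y [Cx Gx] [Cy Gy]. split; [apply cone_add; auto|].
      intros G HG HU. pose proof HG as [[_ [Ga _]] _]. apply Ga; [exact (Gx G HG HU)|exact (Gy G HG HU)].
    + intros c x Hc [Cx Gx]. split; [apply cone_scale; auto|].
      intros G HG HU. pose proof HG as [[_ [_ Gs]] _]. apply Gs; [exact Hc|exact (Gx G HG HU)].
    + intros v Hv; exact (proj1 Hv).
    + intros x y Cx Cy [t [Ht [_ Hxy]]].
      assert (K : forall G, is_face (cone_of M) G -> ~ UFM (face_submonoid M G) -> G x /\ G y).
      { intros G HG HU; apply (proj2 (proj2 HG) x y Cx Cy); exists t; split; [exact Ht|exact (Hxy G HG HU)]. }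
      split; split; [exact Cx| |exact Cy|]; intros G HG HU; apply (K G HG HU).
  - intros F HF. split.
    + intros HU v [_ Hv]. exact (Hv F HF HU).
    + intros Hinc HU.
      assert (FA : forall a, In a (u ++ u') -> F (embed a)) by (intros; apply Hinc, HA; auto).
      assert (Fu0 : Forall (fun a => F (embed a)) u).
      { rewrite Forall_forall; intros; apply FA, in_or_app; auto. }
      assert (Fu0' : Forall (fun a => F (embed a)) u').
      { rewrite Forall_forall; intros; apply FA, in_or_app; auto. }
      assert (AF : forall l, Forall (is_atom M) l -> Forall (fun a => F (embed a)) l ->
                Forall (is_atom (face_submonoid M F)) l).
      { intros l H1 H2. rewrite Forall_forall in *. intros; apply atom_to_face; auto. }
      apply NPu. apply (proj2 (HU (nsum u) (conj (M_nsum d M Hsub u Fu)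
                                              (cone_nsum F u (proj1 HF) Fu0)))).
      * split; auto.
      * split; auto.
Qed.
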